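(* Let $n\ge 1$, let $A\in \mathrm{M}_n(E_0)$ and $B\in \mathrm{M}_n(E_1)$. Let \[p_A(x)=\det(xI_n-A)=\alpha_0+\alpha_1x+\cdots+\alpha_{n-1}x^{n-1}+\alpha_nx^n\in E_0[x]\] be the characteristic polynomial of $A$ (so $\alpha_n=1$). Define elements $\beta_0,\dots,\beta_n\in E_1$ by $\beta_n=0$ and, descending for $k=n-1,n-2,\dots,0$, \[\beta_k=\Big\{-\frac{1}{n-k}\sum_{i=1}^{n-k}\beta_{k+i}\,\mathrm{tr}(A^i)\Big\}+\Big\{-\frac{1}{n-k}\sum_{\substack{r+s\le n-k-1\\ r,s\ge 0}}\alpha_{k+r+s+1}\,\mathrm{tr}(A^rBA^s)\Big\}.\] Then \[\beta_0I_n+\sum_{k=1}^{n}\Big\{\beta_kA^k+\alpha_k\big(A^{k-1}B+A^{k-2}BA+\cdots+ABA^{k-2}+BA^{k-1}\big)\Big\}=0,\] where $I_n$ is the $n\times n$ identity matrix.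
   Context: $K$ is a field of characteristic zero. $E$ is the infinite-dimensional Grassmann (exterior) algebra over $K$, generated by countably many indeterminates $v_1,v_2,\dots$ subject to $v_iv_j+v_jv_i=0$ for all $i,j$ (so $v_i^2=0$). $E=E_0\oplus E_1$ is its natural $\mathbb{Z}_2$-grading: $E_0$ (resp. $E_1$) is the $K$-span of products of an even (resp. odd) number of generators; $E_0$ is commutative and central in $E$. $\mathrm{M}_n(R)$ denotes the algebra of $n\times n$ matrices over $R$. For a matrix $M$ over $E$, $\mathrm{tr}(M)$ is the sum of its diagonal entries. Since $E_0$ is commutative, $\det(xI_n-A)$ for $A\in\mathrm{M}_n(E_0)$ is the usual determinant over the commutative ring $E_0[x]$. $A^0=I_n$. *)

(* Defs.v *)
From HB Require Import structures.
From mathcomp Require Import all_boot all_order all_algebra.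
Set Implicit Arguments.
Unset Strict Implicit.
Unset Printing Implicit Defensive.
Import GRing.Theory.
Local Open Scope ring_scope.

(* The infinite Grassmann algebra, characterised up to isomorphism:
   a K-algebra R with a family of elements v : nat -> R such that
   (1) v_i v_j + v_j v_i = 0 for all i j  (defining relations),
   (2) R is spanned (over K) by the products v_{i1} ... v_{ik} (generation),
   (3) the standard monomials v_{i1}...v_{ik}, i1 < ... < ik, are linearly
       independent over K (no further relations: R is the free algebra on the
       v_i modulo (1)). *)

Definition gmono (K : fieldType) (R : algType K) (v : nat -> R) (s : seq nat) : R :=
  \prod_(i <- s) v i.

Definition is_grassmann (K : fieldType) (R : algType K) (v : nat -> R) : Prop :=
  [/\ (forall i j, v i * v j + v j * v i = 0),
      (forall x : R, exists (S : seq (seq nat)) (c : seq nat -> K),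
          x = \sum_(s <- S) c s *: gmono v s) &
      (forall (S : seq (seq nat)) (c : seq nat -> K),
          uniq S -> all (sorted ltn) S ->
          \sum_(s <- S) c s *: gmono v s = 0 ->
          forall s, s \in S -> c s = 0)].

Definition Eeven (K : fieldType) (R : algType K) (v : nat -> R) (x : R) : Prop :=
  exists (S : seq (seq nat)) (c : seq nat -> K),
    all (fun s => ~~ odd (size s)) S /\ x = \sum_(s <- S) c s *: gmono v s.

Definition Eodd (K : fieldType) (R : algType K) (v : nat -> R) (x : R) : Prop :=
  exists (S : seq (seq nat)) (c : seq nat -> K),
    all (fun s => odd (size s)) S /\ x = \sum_(s <- S) c s *: gmono v s.

(* det(x I_n - A), computed by the Leibniz formula (this is mathcomp's
   char_poly, whose definition requires a commutative ring; here the entries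
   lie in the commutative subring E_0 of R). *)
Definition gchar_poly (R : nzRingType) n (A : 'M[R]_n) : {poly R} :=
  \det ('X%:M - map_mx polyC A).

(* Main.v *)
Require Import Defs.
From HB Require Import structures.
From mathcomp Require Import all_boot all_order all_algebra.
From mathcomp Require Import fingroup perm boolp zify.
Set Implicit Arguments.
Unset Strict Implicit.
Unset Printing Implicit Defensive.
Import GRing.Theory.
Local Open Scope ring_scope.


Definition centralb (R : nzRingType) (x : R) : bool := `[< forall y : R, x * y = y * x >].
Definition centralp (R : nzRingType) : {pred R} := fun x => centralb x.

Lemma centralP (R : nzRingType) (x : R) : reflect (forall y, x * y = y * x) (x \in @centralp R).
Proof. exact: asboolP. Qed.

Lemma central_subring (R : nzRingType) : subring_closed (@centralp R).
Proof.
split.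
- by apply/centralP => y; rewrite mul1r mulr1.
- move=> x y /centralP hx /centralP hy; apply/centralP => z.
  by rewrite mulrBl mulrBr hx hy.
- move=> x y /centralP hx /centralP hy; apply/centralP => z.
  by rewrite -mulrA hy mulrA hx mulrA.
Qed.

Record zc (R : nzRingType) := ZC { zval :> R; zvalP : zval \in @centralp R }.
HB.instance Definition _ (R : nzRingType) := [isSub for @zval R].
HB.instance Definition _ (R : nzRingType) := [Choice of zc R by <:].
HB.instance Definition _ (R : nzRingType) :=
  GRing.SubChoice_isSubNzRing.Build R (@centralp R) (zc R) (central_subring R).

Lemma zc_mulC (R : nzRingType) : commutative (@GRing.mul (zc R)).
Proof. move=> x y; apply: val_inj => /=. by case: x => x /centralP hx /=; rewrite hx. Qed.
HB.instance Definition _ (R : nzRingType) := GRing.PzRing_hasCommutativeMul.Build (zc R) (@zc_mulC R).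


Lemma deriv_prod_seq (C : comNzRingType) (I : eqType) (r : seq I) (F : I -> {poly C}) :
  uniq r ->
  (\prod_(i <- r) F i)^`() = \sum_(i <- r) (F i)^`() * \prod_(j <- r | j != i) F j.
Proof.
elim: r => [|a r IH] /=; first by rewrite !big_nil derivC.
case/andP => anr ur.
rewrite big_cons derivM IH // [in RHS]big_cons /= big_distrr /=.
have -> : \prod_(j <- a :: r | j != a) F j = \prod_(j <- r) F j.
  rewrite big_cons eqxx /= [RHS]big_seq_cond [LHS]big_seq_cond; apply: eq_bigl => j.
  by case jr: (j \in r) => //=; apply/negP => /eqP ja; rewrite -ja jr in anr.
congr (_ + _).
rewrite !big_seq; apply: eq_bigr => i ir.
rewrite big_cons; have -> : (a != i).
  by apply/negP => /eqP ai; rewrite ai ir in anr.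
by rewrite mulrCA.
Qed.

Lemma deriv_prod_ord (C : comNzRingType) n (F : 'I_n -> {poly C}) :
  (\prod_i F i)^`() = \sum_i (F i)^`() * \prod_(j | j != i) F j.
Proof. exact: deriv_prod_seq (index_enum_uniq _). Qed.

Lemma deriv_det (C : comNzRingType) n (D : 'M[{poly C}]_n) :
  (forall i j, (D i j)^`() = (i == j)%:R) ->
  (\det D)^`() = \sum_i cofactor D i i.
Proof.
move=> dD.
have sg (b : bool) : (-1) ^+ b = ((-1) ^+ b)%:P :> {poly C} by rewrite rmorph_sign.
rewrite /determinant raddf_sum /=.
under eq_bigr => s _ do rewrite sg mul_polyC derivZ deriv_prod_ord scaler_sumr.
rewrite exchange_big /=; apply: eq_bigr => i _.
rewrite expand_cofactor [RHS]big_mkcond /=; apply: eq_bigr => s _.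
rewrite dD [_ == i]eq_sym; case: (i == s i); last by rewrite mul0r scaler0.
rewrite mul1r -mul_polyC -sg; congr (_ * _).
by apply: eq_bigl => j; rewrite eq_sym.
Qed.

Definition Nmx (C : comNzRingType) n (M : 'M[C]_n) (j : nat) : 'M[C]_n :=
  \matrix_(a, b) ((\adj (char_poly_mx M)) a b)`_j.

Lemma tr_Nmx (C : comNzRingType) n (M : 'M[C]_n) j :
  \tr (Nmx M j) = (char_poly M)`_j.+1 *+ j.+1.
Proof.
have dD : forall i k, ((char_poly_mx M) i k)^`() = (i == k)%:R.
  by move=> i k; rewrite !mxE derivB derivMn derivX derivC subr0.
rewrite /char_poly -coef_deriv deriv_det // coef_sum /mxtrace.
by apply: eq_bigr => i _; rewrite !mxE.
Qed.

Lemma Nmx_rec (C : comNzRingType) n (M : 'M[C]_n) j :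
  (if j is j'.+1 then Nmx M j' else 0) - M *m Nmx M j = ((char_poly M)`_j)%:M.
Proof.
apply/matrixP => a b.
have := congr1 (fun X : 'M[{poly C}]_n => (X a b)`_j) (mul_mx_adj (char_poly_mx M)).
rewrite /char_poly_mx mulmxBl mul_scalar_mx !mxE coefB coefXM coefMn -/(char_poly_mx M) => <-.
rewrite coef_sum; congr (_ - _).
  by case: j => [|j] //=; rewrite !mxE.
by apply: eq_bigr => c _; rewrite !mxE coefCM.
Qed.

Lemma Nmx_eventually0 (C : comNzRingType) n (M : 'M[C]_n) :
  exists s, forall j, (s <= j)%N -> Nmx M j = 0.
Proof.
exists (\max_a \max_b size ((\adj (char_poly_mx M)) a b)) => j hj.
apply/matrixP => a b; rewrite [LHS]mxE [RHS]mxE nth_default //.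
apply: leq_trans hj; apply: leq_trans (leq_bigmax a).
exact: (leq_bigmax b).
Qed.

Lemma Nmx_ge_n (C : comNzRingType) n (M : 'M[C]_n) j : (n <= j)%N -> Nmx M j = 0.
Proof.
have step : forall k, (n <= k)%N -> Nmx M k = M *m Nmx M k.+1.
  move=> k hk; have := Nmx_rec M k.+1.
  rewrite [(char_poly M)`__]nth_default ?size_char_poly // => /eqP.
  by rewrite scalar_mx_is_nmod_morphism subr_eq0 => /eqP.
have iter : forall m k, (n <= k)%N -> Nmx M k = M ^+ m *m Nmx M (k + m).
  elim => [|m IH] k hk; first by rewrite expr0 mul1mx addn0.
  rewrite IH // step; last by apply: leq_trans hk (leq_addr _ _).
  by rewrite mulmxA addnS exprSr.
move=> hj; have [s hs] := Nmx_eventually0 M.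
by rewrite (iter s j hj) hs ?mulmx0 // leq_addl.
Qed.

Lemma MNmx (C : comNzRingType) n (M : 'M[C]_n) d k : (k + d = n)%N ->
  M *m Nmx M k = \sum_(i < d) (char_poly M)`_(k + i + 1) *: M ^+ i.+1.
Proof.
elim: d k => [|d IH] k hk.
  by rewrite big_ord0 Nmx_ge_n ?mulmx0 // -hk addn0.
have := Nmx_rec M k.+1; move/eqP; rewrite subr_eq => /eqP ->.
rewrite mulmxDr IH; last by rewrite addSnnS.
rewrite big_ord_recl /= addn0 addn1 expr1 mul_mx_scalar; congr (_ + _).
rewrite mulmx_sumr; apply: eq_bigr => i _.
by rewrite -scalemxAr /bump /= add1n addSnnS [M ^+ i.+2]exprS.
Qed.

Lemma newton_mx (C : comNzRingType) n (M : 'M[C]_n) k : (k <= n)%N ->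
  (char_poly M)`_k *+ (n - k) =
  - \sum_(i < n - k) (char_poly M)`_(k + i + 1) * \tr (M ^+ i.+1).
Proof.
move=> hk.
have h1 := congr1 mxtrace (Nmx_rec M k).
rewrite mxtrace_scalar raddfB /= in h1.
have h0 : \tr (if k is j'.+1 then Nmx M j' else 0) = (char_poly M)`_k *+ k.
  by case: (k) => [|j]; rewrite ?mxtrace0 ?mulr0n // tr_Nmx.
have hn : (char_poly M)`_k *+ n = (char_poly M)`_k *+ (n - k) + (char_poly M)`_k *+ k.
  by rewrite -mulrnDr subnK.
rewrite h0 hn in h1.
have h2 : \tr (M *m Nmx M k) = - (char_poly M)`_k *+ (n - k).
  rewrite -[LHS](subKr ((char_poly M)`_k *+ k)) h1 opprD addrCA subrr addr0.
  by rewrite mulNrn.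
rewrite (@MNmx _ _ _ (n - k)) ?subnKC // raddf_sum /= in h2.
rewrite -(eq_bigr _ (fun i _ => mxtraceZ _ _)) h2.
by rewrite mulNrn opprK.
Qed.


Lemma reindex_tri (V : zmodType) (f : nat -> nat -> V) m :
  \sum_(i < m) \sum_(j < i.+1) f (i - j)%N j = \sum_(r < m) \sum_(s < m - r) f r s.
Proof.
elim: m => [|m IH]; first by rewrite !big_ord0.
rewrite big_ord_recr /= IH.
have -> : \sum_(r < m.+1) \sum_(s < m.+1 - r) f r s =
          \sum_(r < m.+1) (\sum_(s < m - r) f r s + f r (m - r)%N).
  apply: eq_bigr => r _; rewrite subSn ?big_ord_recr //; exact: (ltn_ord r).
rewrite big_split /= [in RHS]big_ord_recr /= subnn big_ord0 addr0; congr (_ + _).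
rewrite (reindex_inj rev_ord_inj) /=; apply: eq_bigr => j _.
by rewrite subSS subKn //; exact: (ltn_ord j).
Qed.

Definition Mt (C : comNzRingType) n (A B : 'M[C]_n) : 'M[{poly C}]_n :=
  map_mx polyC A + 'X *: map_mx polyC B.
Definition Sk (C : comNzRingType) n (A B : 'M[C]_n) k : 'M[C]_n :=
  \sum_(j < k) A ^+ (k.-1 - j) *m B *m A ^+ j.
Definition dbeta (C : comNzRingType) n (A B : 'M[C]_n) k : C :=
  ((char_poly (Mt A B))`_k)`_1.
Definition cmx (C : comNzRingType) n (X : 'M[{poly C}]_n) i : 'M[C]_n :=
  \matrix_(a, b) (X a b)`_i.

Lemma coef1M (C : comNzRingType) (p q : {poly C}) : (p * q)`_1 = p`_0 * q`_1 + p`_1 * q`_0.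
Proof. by rewrite coefM big_ord_recr big_ord_recr big_ord0 /= add0r. Qed.

Lemma cmx0M (C : comNzRingType) n (X Y : 'M[{poly C}]_n) :
  cmx (X *m Y) 0 = cmx X 0 *m cmx Y 0.
Proof.
apply/matrixP => a b; rewrite !mxE coef_sum; apply: eq_bigr => c _.
by rewrite !mxE coef0M.
Qed.

Lemma cmx1M (C : comNzRingType) n (X Y : 'M[{poly C}]_n) :
  cmx (X *m Y) 1 = cmx X 0 *m cmx Y 1 + cmx X 1 *m cmx Y 0.
Proof.
apply/matrixP => a b; rewrite !mxE coef_sum -big_split; apply: eq_bigr => c _.
by rewrite !mxE coef1M.
Qed.

Lemma cmx_Mt (C : comNzRingType) n (A B : 'M[C]_n) :
  cmx (Mt A B) 0 = A /\ cmx (Mt A B) 1 = B.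
Proof.
by split; apply/matrixP => a b; rewrite !mxE coefD coefXM coefC /= ?add0r ?addr0 ?coefC.
Qed.

Lemma Sk_S (C : comNzRingType) n (A B : 'M[C]_n) k :
  Sk A B k.+1 = A ^+ k *m B + Sk A B k *m A.
Proof.
rewrite /Sk big_ord_recl /= subn0 expr0 mulmx1; congr (_ + _).
rewrite mulmx_suml; apply: eq_bigr => j _.
rewrite /bump /= add1n [A ^+ j.+1]exprSr subnS predn_sub -!mulmxA; do 2 congr (_ *m _); exact: mulmxA.
Qed.

Lemma cmx_powMt (C : comNzRingType) n (A B : 'M[C]_n) k :
  cmx (Mt A B ^+ k) 0 = A ^+ k /\ cmx (Mt A B ^+ k) 1 = Sk A B k.
Proof.
have [h0 h1] := cmx_Mt A B.
elim: k => [|k [IH0 IH1]].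
  rewrite /Sk big_ord0 !expr0; split; apply/matrixP => a b; rewrite !mxE coefMn ?coef1 //.
  by rewrite mul0rn.
rewrite exprSr -[Mt A B ^+ k * Mt A B]/(Mt A B ^+ k *m Mt A B) cmx0M cmx1M IH0 IH1 h0 h1 Sk_S exprSr; split => //.
Qed.

Lemma tr_cmx (C : comNzRingType) n (X : 'M[{poly C}]_n) j : (\tr X)`_j = \tr (cmx X j).
Proof. by rewrite coef_sum; apply: eq_bigr => i _; rewrite mxE. Qed.

Lemma dalpha (C : comNzRingType) n (A B : 'M[C]_n) k :
  ((char_poly (Mt A B))`_k)`_0 = (char_poly A)`_k.
Proof.
have := map_char_poly (horner_eval (0 : C)) (Mt A B).
have -> : map_mx (horner_eval 0) (Mt A B) = A.
  rewrite -[RHS](proj1 (cmx_Mt A B)); apply/matrixP => a b.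
  by rewrite !mxE horner_evalE horner_coef0.
by move=> <-; rewrite coef_map /= horner_evalE horner_coef0.
Qed.

Lemma dbeta_rec (C : comNzRingType) n (A B : 'M[C]_n) k : (k < n)%N ->
  dbeta A B k *+ (n - k) =
  - (\sum_(1 <= i < (n - k).+1) dbeta A B (k + i) * \tr (A ^+ i)
     + \sum_(r < n - k) \sum_(s < n - k - r)
          (char_poly A)`_(k + r + s + 1) * \tr (A ^+ r *m B *m A ^+ s)).
Proof.
move=> hk; have h := newton_mx (Mt A B) (ltnW hk).
have -> : dbeta A B k *+ (n - k) = ((char_poly (Mt A B))`_k *+ (n - k))`_1 by rewrite coefMn.
rewrite h coefN coef_sum; congr (- _).
under eq_bigr => i _ do rewrite coef1M !tr_cmx dalpha (proj1 (cmx_powMt A B _)) (proj2 (cmx_powMt A B _)).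
rewrite big_split /= addrC; congr (_ + _).
  by rewrite big_add1 big_mkord; apply: eq_bigr => i _; rewrite addn1 addnS.
rewrite -(reindex_tri (fun r s => (char_poly A)`_(k + r + s + 1) * \tr (A ^+ r *m B *m A ^+ s))); apply: eq_bigr => i _.
rewrite /Sk raddf_sum big_distrr /=; apply: eq_bigr => j _.
by rewrite -[(k + (i - j) + j)%N]addnA subnK // -ltnS.
Qed.

Lemma cmx_sum (C : comNzRingType) n (I : finType) (F : I -> 'M[{poly C}]_n) j :
  cmx (\sum_i F i) j = \sum_i cmx (F i) j.
Proof.
apply/matrixP => a b; rewrite !mxE summxE coef_sum summxE.
by apply: eq_bigr => i _; rewrite !mxE.
Qed.

Lemma cmxZ1 (C : comNzRingType) n (c : {poly C}) (X : 'M[{poly C}]_n) :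
  cmx (c *: X) 1 = c`_0 *: cmx X 1 + c`_1 *: cmx X 0.
Proof. by apply/matrixP => a b; rewrite !mxE coef1M. Qed.

Lemma dCH (C : comNzRingType) n (A B : 'M[C]_n) : (0 < n)%N ->
  dbeta A B 0 *: 1%:M +
  \sum_(1 <= k < n.+1) (dbeta A B k *: A ^+ k + (char_poly A)`_k *: Sk A B k) = 0.
Proof.
case: n A B => [//|n'] A B _.
have CH := Cayley_Hamilton (Mt A B).
have hP : horner_mx (Mt A B) (char_poly (Mt A B)) =
    \sum_(k < n'.+2) (char_poly (Mt A B))`_k *: (Mt A B) ^+ k.
  rewrite -{1}[char_poly (Mt A B)]coefK poly_def size_char_poly rmorph_sum.
  by apply: eq_bigr => k _; rewrite -mul_polyC rmorphM /= horner_mx_C rmorphXn /= horner_mx_X -mul_scalar_mx.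
have := congr1 (fun X => cmx X 1) CH; rewrite hP cmx_sum /=.
have -> : cmx 0 1 = 0 :> 'M[C]_n'.+1 by apply/matrixP => a b; rewrite !mxE coef0.
move=> h; rewrite -[RHS]h big_ord_recl /= big_add1 big_mkord /=; congr (_ + _).
  rewrite cmxZ1 dalpha (proj1 (cmx_powMt A B _)) (proj2 (cmx_powMt A B _)).
  by rewrite /Sk big_ord0 scaler0 add0r expr0.
apply: eq_bigr => k _.
rewrite cmxZ1 dalpha (proj1 (cmx_powMt A B _)) (proj2 (cmx_powMt A B _)).
by rewrite addrC.
Qed.


Lemma gmono_cons (K : fieldType) (R : algType K) (v : nat -> R) a s :
  gmono v (a :: s) = v a * gmono v s.
Proof. by rewrite /gmono big_cons. Qed.

Lemma gmono_v (K : fieldType) (R : algType K) (v : nat -> R)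
  (Hrel : forall i j, v i * v j + v j * v i = 0) s i :
  gmono v s * v i = if odd (size s) then - (v i * gmono v s) else v i * gmono v s.
Proof.
elim: s => [|a s IH] /=; first by rewrite /gmono big_nil mul1r mulr1.
rewrite gmono_cons -mulrA IH.
have hai : v a * v i = - (v i * v a) by apply/eqP; rewrite -addr_eq0 Hrel.
case: (odd (size s)) => /=.
  by rewrite mulrN !mulrA hai mulNr opprK.
by rewrite !mulrA hai mulNr.
Qed.

Lemma even_comm_gmono (K : fieldType) (R : algType K) (v : nat -> R)
  (Hrel : forall i j, v i * v j + v j * v i = 0) s t :
  ~~ odd (size s) -> gmono v s * gmono v t = gmono v t * gmono v s.
Proof.
move=> es; elim: t => [|a t IH]; first by rewrite /gmono big_nil mul1r mulr1.
by rewrite gmono_cons mulrA gmono_v // (negbTE es) -!mulrA IH.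
Qed.

Lemma Eeven_central (K : fieldType) (R : algType K) (v : nat -> R)
  (HE : is_grassmann v) x : Eeven v x -> forall y, x * y = y * x.
Proof.
case: HE => Hrel Hspan _ [S [c [hS ->]]] y.
have [T [d ->]] := Hspan y.
rewrite mulr_suml mulr_sumr; apply: eq_big_seq => s sS.
rewrite mulr_suml mulr_sumr; apply: eq_bigr => t _.
rewrite -!scalerAl -!scalerAr !scalerA even_comm_gmono ?(mulrC (c s)) //.

by move/allP: hS => /(_ s sS).
Qed.


Lemma scal_commr (R : nzRingType) n (X M : 'M[R]_n) (b : R) :
  (forall i j, X i j * b = b * X i j) -> X *m (b *: M) = b *: (X *m M).
Proof.
move=> h; apply/matrixP => i j; rewrite !mxE mulr_sumr; apply: eq_bigr => c _.
by rewrite !mxE mulrA h -mulrA.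
Qed.

Lemma zc_central (R : nzRingType) (z : zc R) (y : R) : val z * y = y * val z.
Proof. by case: z => x /= /centralP h; rewrite h. Qed.

Lemma zc_central' (R : nzRingType) (z : zc R) (y : R) : zval z * y = y * zval z.
Proof. exact: zc_central. Qed.

Lemma zvalM (R : nzRingType) (x y : zc R) : zval (x * y) = zval x * zval y.
Proof. by []. Qed.

Lemma zval_sum (R : nzRingType) (I : Type) (r : seq I) (P : pred I) (F : I -> zc R) :
  zval (\sum_(i <- r | P i) F i) = \sum_(i <- r | P i) zval (F i).
Proof. exact: (rmorph_sum (\val : zc R -> R)). Qed.

Lemma map_mxD_z (R : nzRingType) n (X Y : 'M[zc R]_n) :
  map_mx (@zval R) (X + Y) = map_mx (@zval R) X + map_mx (@zval R) Y.
Proof. exact: (map_mxD (\val : zc R -> R)). Qed.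

Lemma map_mxZ_z (R : nzRingType) n (a : zc R) (X : 'M[zc R]_n) :
  map_mx (@zval R) (a *: X) = zval a *: map_mx (@zval R) X.
Proof. exact: (map_mxZ (\val : zc R -> R)). Qed.

Lemma map_mx_sum_z (R : nzRingType) n (I : Type) (r : seq I) (P : pred I) (F : I -> 'M[zc R]_n) :
  map_mx (@zval R) (\sum_(i <- r | P i) F i) = \sum_(i <- r | P i) map_mx (@zval R) (F i).
Proof. exact: (map_mx_sum (\val : zc R -> R)). Qed.

Lemma transfer_mid (R : nzRingType) n (X Y : 'M[zc R]_n) (B : 'M[R]_n) :
  map_mx val X *m B *m map_mx val Y =
  \sum_a \sum_b B a b *: map_mx val (X *m delta_mx a b *m Y).
Proof.
rewrite {1}[B]matrix_sum_delta mulmx_sumr mulmx_suml; apply: eq_bigr => a _.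
rewrite mulmx_sumr mulmx_suml; apply: eq_bigr => b _.
rewrite scal_commr; last by move=> i j; rewrite mxE zc_central.
by rewrite -scalemxAl !map_mxM map_delta_mx.
Qed.

Lemma map_mx_pow (R : nzRingType) n (X : 'M[zc R]_n) k :
  map_mx val (X ^+ k) = (map_mx val X) ^+ k.
Proof.
elim: k => [|k IH]; first by rewrite !expr0 map_mx1.
by rewrite !exprS -[X * _]/(X *m _) map_mxM IH.
Qed.

Lemma transfer_mid2 (R : nzRingType) n (X Y : 'M[zc R]_n) (B : 'M[R]_n) :
  map_mx val X *m B *m map_mx val Y =
  \sum_(p : 'I_n * 'I_n) B p.1 p.2 *: map_mx val (X *m delta_mx p.1 p.2 *m Y).
Proof. by rewrite transfer_mid pair_bigA. Qed.

Lemma dbeta_n (C : comNzRingType) n (A B : 'M[C]_n) : dbeta A B n = 0.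
Proof.
rewrite /dbeta.
have := char_poly_monic (Mt A B); move/monicP; rewrite lead_coefE size_char_poly /= => ->.
by rewrite coef1.
Qed.

Lemma natscale (K : fieldType) (charK0 : [pchar K] =i pred0) (R : algType K) (x y : R) m :
  (0 < m)%N -> x *+ m = y -> x = ((m%:R : K)^-1) *: y.
Proof.
move=> hm <-; rewrite -scaler_nat scalerA mulVf ?scale1r //.
by move/pcharf0P: charK0 => ->; rewrite -lt0n.
Qed.

Unset Implicit Arguments.

Theorem theorem2p1 (K : fieldType) (charK0 : [pchar K] =i pred0)
  (R : algType K) (v : nat -> R) (HE : is_grassmann v)
  (n : nat) (n_gt0 : (0 < n)%N) (A B : 'M[R]_n)
  (HA : forall i j, Eeven v (A i j)) (HB : forall i j, Eodd v (B i j))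
  (beta : nat -> R)
  (beta_n : beta n = 0)
  (beta_k : forall k : nat, (k < n)%N ->
     beta k =
       - (((n - k)%:R : K)^-1 *:
            \sum_(1 <= i < (n - k).+1) beta (k + i) * \tr (A ^+ i))
       - (((n - k)%:R : K)^-1 *:
            \sum_(r < n - k) \sum_(s < n - k - r)
               (gchar_poly A)`_(k + r + s + 1) * \tr (A ^+ r *m B *m A ^+ s))) :
  beta 0 *: (1%:M : 'M[R]_n)
  + \sum_(1 <= k < n.+1)
      (beta k *: A ^+ k
       + (gchar_poly A)`_k *: \sum_(j < k) (A ^+ (k.-1 - j) *m B *m A ^+ j))
  = 0.
Proof.
have cA : forall i j, A i j \in @centralp R.
  by move=> i j; apply/centralP; exact: Eeven_central (HA i j).
pose A0 : 'M[zc R]_n := \matrix_(i, j) ZC (cA i j).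
have eA : map_mx val A0 = A by apply/matrixP => i j; rewrite !mxE.
have eP : forall k, (gchar_poly A)`_k = val ((char_poly A0)`_k).
  by move=> k; rewrite -coef_map map_char_poly eA.
pose db (p : 'I_n * 'I_n) k := dbeta A0 (delta_mx p.1 p.2) k.
pose beta' k := \sum_(p : 'I_n * 'I_n) B p.1 p.2 * val (db p k).
have trpow : forall i, \tr (A ^+ i) = val (\tr (A0 ^+ i)).
  by move=> i; rewrite -trace_map_mx map_mx_pow eA.
have trmid : forall r s, \tr (A ^+ r *m B *m A ^+ s) =
    \sum_(p : 'I_n * 'I_n) B p.1 p.2 * val (\tr (A0 ^+ r *m delta_mx p.1 p.2 *m A0 ^+ s)).
  move=> r s; rewrite -eA -!map_mx_pow transfer_mid2 raddf_sum /=.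
  by apply: eq_bigr => p _; rewrite mxtraceZ (trace_map_mx val).
have rec' : forall k, (k < n)%N -> beta' k *+ (n - k) =
    - (\sum_(1 <= i < (n - k).+1) beta' (k + i) * \tr (A ^+ i)
       + \sum_(r < n - k) \sum_(s < n - k - r)
            (gchar_poly A)`_(k + r + s + 1) * \tr (A ^+ r *m B *m A ^+ s)).
  move=> k hk.
  rewrite /beta' -sumrMnl.
  under eq_bigr => p _ do rewrite -mulrnAr -rmorphMn /db dbeta_rec // rmorphN rmorphD !rmorph_sum mulrN mulrDr.
  rewrite sumrN big_split /=; congr (- (_ + _)).
    under eq_bigr => p _ do rewrite mulr_sumr.
    rewrite exchange_big; apply: eq_bigr => i _.
    rewrite mulr_suml trpow; apply: eq_bigr => p _.
    transitivity (B p.1 p.2 * (val (db p (k+i)) * val (\tr (A0 ^+ i)))); last exact: mulrA.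
    by congr (_ * _); exact: rmorphM.
  under eq_bigr => p _ do (rewrite mulr_sumr; under eq_bigr => r _ do rewrite zval_sum mulr_sumr).
  rewrite exchange_big; apply: eq_bigr => r _.
  rewrite exchange_big; apply: eq_bigr => s _.
  rewrite eP trmid mulr_sumr; apply: eq_bigr => p _.
  set a := (char_poly A0)`_(k + r + s + 1).
  set t := \tr (A0 ^+ r *m delta_mx p.1 p.2 *m A0 ^+ s).
  transitivity ((B p.1 p.2 * zval a) * zval t); first exact: mulrA.
  by rewrite -(zc_central' a) -mulrA.
have beta'_n : beta' n = 0.
  by rewrite /beta' big1 // => p _; rewrite /db dbeta_n rmorph0 mulr0.
have key : forall m k, (n - k < m)%N -> (k <= n)%N -> beta k = beta' k.
  elim=> [//|m IH] k hm hk.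
  case: (ltnP k n) => hkn; last first.
    have -> : k = n by apply/eqP; rewrite eqn_leq hk hkn.
    by rewrite beta_n beta'_n.
  rewrite beta_k // [RHS](natscale charK0 _ (rec' k hkn)) ?subn_gt0 //.
  rewrite scalerN scalerDr opprD.
  congr (- (_ *: _) - _).
  apply: eq_big_nat => i /andP [hi1 hi2]; rewrite IH //; lia.
have ebeta : forall k, (k <= n)%N -> beta k = beta' k.
  by move=> k hk; exact: (key (n - k).+1 k (ltnSn _) hk).
transitivity (\sum_(p : 'I_n * 'I_n) B p.1 p.2 *: map_mx val
   (db p 0 *: 1%:M + \sum_(1 <= k < n.+1)
      (db p k *: A0 ^+ k + (char_poly A0)`_k *: Sk A0 (delta_mx p.1 p.2) k))); last first.
  by rewrite big1 // => p _; rewrite /db dCH // map_mx0 scaler0.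
under [RHS]eq_bigr => p _ do rewrite map_mxD map_mx_sum map_mxZ map_mx1 scalerDr scaler_sumr.
rewrite [RHS]big_split /=; congr (_ + _).
  by rewrite ebeta // /beta' scaler_suml; apply: eq_bigr => p _; rewrite scalerA.
rewrite exchange_big /=; apply: eq_big_nat => k /andP [hk1 hk2].
rewrite ebeta //; under [RHS]eq_bigr => p _ do rewrite map_mxD_z !map_mxZ_z scalerDr.
rewrite [RHS]big_split /=; congr (_ + _).
  by rewrite /beta' scaler_suml; apply: eq_bigr => p _; rewrite map_mx_pow eA scalerA.
rewrite eP /Sk.
under [RHS]eq_bigr => p _ do rewrite map_mx_sum_z !scaler_sumr.
rewrite exchange_big scaler_sumr /=; apply: eq_bigr => j _.
rewrite -eA -!map_mx_pow transfer_mid2 scaler_sumr; apply: eq_bigr => p _.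
by rewrite !scalerA zc_central.
Qed.
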